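(* Let $K$ be a fan-like simplicial sphere and $v$ a vertex of $K$. Let $(\operatorname{wed}_v(K),\lambda)$ be a characteristic map over $\mathbb{Z}_2$ and let $v_1,v_2$ be the two new vertices of $\operatorname{wed}_v(K)$ created by the wedging. Then $\lambda$ is uniquely determined by the projections $\operatorname{proj}_{v_1}\lambda$ and $\operatorname{proj}_{v_2}\lambda$. Furthermore, $\lambda$ is non-singular if and only if both $\operatorname{proj}_{v_1}\lambda$ and $\operatorname{proj}_{v_2}\lambda$ are non-singular.
   Context: Simplicial wedge: for a simplicial complex $K$ on vertex set $V$ and a vertex $v$, let $I$ be a 1-simplex on new vertices $v_1,v_2$ with 0-skeleton $\partial I$; $\operatorname{wed}_v(K)=(I\star\operatorname{link}_K\{v\})\cup(\partial I\star(K\setminus\{v\}))$, where $\star$ is the join, $\operatorname{link}_K\sigma=\{\tau\in K:\sigma\cup\tau\in K,\ \sigma\cap\tau=\varnothing\}$, and $K\setminus\{v\}$ is the induced subcomplex on $V\setminus\{v\}$. A simplicial $(n-1)$-sphere is fan-like if it underlies a complete simplicial fan in $\mathbb{R}^n$. A characteristic map over $\mathbb{Z}_2$ of dimension $n$ is a pair $(K,\lambda)$, $K$ a simplicial complex of dimension $\le n-1$, $\lambda:V(K)\to\mathbb{Z}_2^n$; it is non-singular if $\{\lambda(i):i\in\sigma\}$ is linearly independent over $\mathbb{Z}_2$ for every face $\sigma$. For a face $\sigma$ on which $\lambda$ is linearly independent, $\operatorname{proj}_\sigma\lambda$ is the map on vertices of $\operatorname{link}_K\sigma$ given by $w\mapsto[\lambda(w)]\in\mathbb{Z}_2^n/\langle\lambda(i):i\in\sigma\rangle$.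 Characteristic maps are considered up to $GL_n(\mathbb{Z}_2)$ acting on the target (Davis–Januszkiewicz equivalence). *)

(* Defs.v *)
From HB Require Import structures.
From mathcomp Require Import all_boot all_order all_algebra all_field.
From mathcomp Require Import Rstruct.
From Stdlib Require Rdefinitions.
Notation R := Rdefinitions.R.
Set Implicit Arguments. Unset Strict Implicit. Unset Printing Implicit Defensive.
Import Order.TTheory GRing.Theory Num.Theory.
Local Open Scope ring_scope.

Definition simplicial_complex (V : finType) (K : {set {set V}}) : Prop :=
  set0 \in K /\ forall s t : {set V}, s \in K -> t \subset s -> t \in K.

Definition vertices (V : finType) (K : {set {set V}}) : {set V} :=
  [set x | [set x] \in K].

Definition link (V : finType) (K : {set {set V}}) (s : {set V}) : {set {set V}} :=
  [set t in K | (s :|: t \in K) && [disjoint s & t]].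

Definition del (V : finType) (K : {set {set V}}) (v : V) : {set {set V}} :=
  [set s in K | v \notin s].

Definition join (V : finType) (A : {set {set V}}) (B : {set {set bool}})
  : {set {set (V + bool)}} :=
  [set (inl @: (a : {set V})) :|: (inr @: (b : {set bool})) | a in A, b in B].

(* I : the 1-simplex on the new vertices v1 = inr false, v2 = inr true;
   dI : its 0-skeleton *)
Definition I1 : {set {set bool}} := powerset [set: bool].
Definition dI1 : {set {set bool}} := [set set0; [set false]; [set true]].

Definition v1 (V : Type) : V + bool := inr false.
Definition v2 (V : Type) : V + bool := inr true.

(* wed_v(K) = (I * link_K {v}) u (dI * (K \ {v})) *)
Definition wedge (V : finType) (K : {set {set V}}) (v : V) : {set {set (V + bool)}} :=
  join (link K [set v]) I1 :|: join (del K v) dI1.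

Definition in_cone (V : finType) (n : nat) (p : V -> 'rV[R]_n) (s : {set V})
  (x : 'rV[R]_n) : Prop :=
  exists t : V -> R, (forall i, 0 <= t i) /\ x = \sum_(i in s) t i *: p i.

(* K underlies a complete simplicial fan in R^n, the ray of vertex i being
   spanned by p i: the generators of each cone are linearly independent,
   two cones meet in the cone of the common face, and the cones cover R^n. *)
Definition fan_like (V : finType) (K : {set {set V}}) (n : nat) : Prop :=
  exists p : V -> 'rV[R]_n,
    [/\ (forall s, s \in K -> forall c : V -> R,
            \sum_(i in s) c i *: p i = 0 -> forall i, i \in s -> c i = 0),
        (forall s t, s \in K -> t \in K -> forall x,
            in_cone p s x -> in_cone p t x -> in_cone p (s :&: t) x) &
        (forall x, exists2 s, s \in K & in_cone p s x)].

Definition span_of (T : finType) (d : nat) (lam : T -> 'rV['F_2]_d) (s : {set T})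
  : 'M['F_2]_d := (\sum_(i in s) <<lam i>>)%MS.

Definition indep_mod (T : finType) (d : nat) (U : 'M['F_2]_d) (t : {set T})
  (lam : T -> 'rV['F_2]_d) : Prop :=
  forall c : T -> 'F_2, ((\sum_(w in t) c w *: lam w)%R <= U)%MS ->
    forall w, w \in t -> c w = 0.

(* lam is linearly independent on the face s (so proj_s lam is defined) *)
Definition indep_on (T : finType) (d : nat) (lam : T -> 'rV['F_2]_d) (s : {set T})
  : Prop := indep_mod (0 : 'M['F_2]_d) s lam.

Definition nonsingular (T : finType) (d : nat) (K : {set {set T}})
  (lam : T -> 'rV['F_2]_d) : Prop :=
  forall s, s \in K -> indep_on lam s.

(* proj_s lam : w |-> [lam w] in 'F_2^d / <lam(s)>, on the vertices of link_K s;
   it is non-singular iff its values on each face of the link are independent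
   in the quotient *)
Definition proj_nonsingular (T : finType) (d : nat) (K : {set {set T}})
  (s : {set T}) (lam : T -> 'rV['F_2]_d) : Prop :=
  forall t, t \in link K s -> indep_mod (span_of lam s) t lam.

Definition DJ_equiv (T : finType) (d : nat) (K : {set {set T}})
  (lam lam' : T -> 'rV['F_2]_d) : Prop :=
  exists2 g : 'M['F_2]_d, g \in unitmx &
    forall x, x \in vertices K -> lam' x = lam x *m g.

(* DJ equivalence of proj_s lam and proj_s lam': a linear isomorphism
   'F_2^d/<lam(s)> -> 'F_2^d/<lam'(s)> carrying [lam w] to [lam' w] for every
   vertex w of link_K s; written via a lift g in GL_d mapping <lam(s)> onto
   <lam'(s)> (every isomorphism of the quotients lifts to such a g). *)
Definition proj_DJ_equiv (T : finType) (d : nat) (K : {set {set T}})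
  (s : {set T}) (lam lam' : T -> 'rV['F_2]_d) : Prop :=
  exists2 g : 'M['F_2]_d, g \in unitmx &
    (span_of lam s *m g == span_of lam' s)%MS /\
    forall w, w \in vertices (link K s) ->
      (lam w *m g - lam' w <= span_of lam' s)%MS.

(* Main.v *)
Require Import Defs.
From HB Require Import structures.
From mathcomp Require Import all_boot all_order all_algebra all_field.
From mathcomp Require Import zify.
Set Implicit Arguments. Unset Strict Implicit. Unset Printing Implicit Defensive.
Import GRing.Theory.
Local Open Scope ring_scope.

Lemma F2_nz (k : 'F_2) : k != 0 -> k = 1.
Proof. by case: k => [[|[|]]] //= H _; apply/val_inj. Qed.

Lemma span1 (T : finType) d (lam : T -> 'rV['F_2]_d) a :
  span_of lam [set a] = <<lam a>>%MS.
Proof. by rewrite /span_of big_set1. Qed.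

Lemma sub_line d (y u : 'rV['F_2]_d) : (y <= <<u>>)%MS -> exists k, y = k *: u.
Proof.
rewrite genmxE => /submxP [D ->]; exists (D 0 0).
by rewrite {1}(mx11_scalar D) mul_scalar_mx.
Qed.

Lemma L1 (T : finType) d (lam : T -> 'rV['F_2]_d) a t :
  indep_on lam (a |: t) -> a \notin t -> indep_mod (span_of lam [set a]) t lam.
Proof.
move=> H nt c; rewrite span1 => /sub_line [k hk] w wt.
pose c' y := if y == a then - k else c y.
have eqs : \sum_(y in t) c' y *: lam y = \sum_(y in t) c y *: lam y.
  apply: eq_bigr => y yt; rewrite /c'; case: eqP => // ya.
  by move: nt; rewrite -ya yt.
have := H c'; rewrite big_setU1 //= eqs hk /c' eqxx scaleNr addNr sub0mx.
move=> /(_ isT w); rewrite setU1r // => /(_ isT).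
by rewrite /c'; case: eqP => // wa; move: nt; rewrite -wa wt.
Qed.

Lemma L2 (T : finType) d (lam : T -> 'rV['F_2]_d) a t :
  indep_on lam [set a] -> indep_mod (span_of lam [set a]) t lam -> a \notin t ->
  indep_on lam (a |: t).
Proof.
move=> Ha Ht nt c; rewrite big_setU1 //= submx0 => /eqP hs.
have hS : \sum_(y in t) c y *: lam y = (- c a) *: lam a.
  by apply/eqP; rewrite scaleNr -addr_eq0 addrC hs.
have ht : forall w, w \in t -> c w = 0.
  by apply: Ht; rewrite span1 genmxE hS scalemx_sub.
have hca : c a = 0.
  apply: (Ha c); last by rewrite set11.
  rewrite big_set1 submx0; apply/eqP; rewrite -hs big1 ?addr0 // => y yt.
  by rewrite ht ?scale0r.
move=> w /setU1P [-> // | wt]; exact: ht.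
Qed.

Lemma L3 (T : finType) d (lam : T -> 'rV['F_2]_d) (U : 'M_d) t :
  indep_mod U t lam -> indep_on lam t.
Proof. by move=> H c hs; apply: H; exact: submx_trans hs (sub0mx _ _). Qed.

Lemma nz_of_indep (T : finType) d (lam : T -> 'rV['F_2]_d) a :
  indep_on lam [set a] -> lam a != 0.
Proof.
move=> H; apply/eqP => h; have := H (fun _ => 1); rewrite big_set1 h scaler0 sub0mx.
by move=> /(_ isT a (set11 a)) /eqP; rewrite oner_eq0.
Qed.
Lemma dual_ext (F : fieldType) (T : finType) d (a : T -> 'rV[F]_d) (e : T -> F) :
 (forall c : T -> F, \sum_x c x *: a x = 0 -> \sum_x c x * e x = 0) ->
 exists f : 'cV[F]_d, forall x, a x *m f = (e x)%:M.
Proof.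
move=> H.
pose A : 'M[F]_(#|T|, d) := \matrix_(i < #|T|) a (enum_val i).
pose E : 'cV[F]_(#|T|) := \col_i e (enum_val i).
have kAE : (kermx A *m E = 0).
  apply/row_matrixP => i; rewrite row_mul row0.
  set r := row i (kermx A).
  have rA : r *m A = 0 by rewrite /r -row_mul mulmx_ker row0.
  pose c := fun x => r 0 (enum_rank x).
  have Hc := H c.
  rewrite (mulmx_sum_row r A) in rA.
  rewrite (mulmx_sum_row r E).
  have e1 : \sum_x c x *: a x = \sum_i r 0 i *: row i A.
    rewrite (big_enum_val (A:=T)) /=.
    apply: eq_bigr => j _; by rewrite /c enum_valK rowK.
  have e2 : (\sum_x c x * e x)%:M = \sum_i r 0 i *: row i E :> 'M_1.
    rewrite (big_enum_val (A:=T)) /= raddf_sum /=.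
    apply: eq_bigr => j _; rewrite /c enum_valK; apply/matrixP => p q.
    by rewrite !ord1 !mxE /= mulr1n.
  by rewrite -e2 Hc ?e1 // raddf0.
pose B := row_mx A E.
have kAB : (kermx A <= kermx B)%MS.
  by apply/sub_kermxP; rewrite mul_mx_row mulmx_ker kAE row_mx0.
have rk := mxrankS kAB; rewrite !mxrank_ker in rk.
have rB : (\rank B <= \rank A)%N.
  have := rank_leq_row A; have := rank_leq_row B; lia.
have sS : (A^T + E^T <= A^T)%MS.
  have sub := @addsmxSl _ _ _ _ A^T E^T.
  case: (mxrank_leqif_sup sub) => _ <-.
  have := mxrankS sub; rewrite addsmxE -tr_row_mx !mxrank_tr => h.
  by rewrite eqn_leq h.
have sE : (E^T <= A^T)%MS by move: sS; rewrite addsmx_sub => /andP[].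
exists (E^T *m pinvmx A^T)^T => x.
have AfE : A *m (E^T *m pinvmx A^T)^T = E.
  by apply: trmx_inj; rewrite trmx_mul trmxK mulmxKpV.
have -> : a x = row (enum_rank x) A by rewrite rowK enum_rankK.
rewrite -row_mul AfE; apply/matrixP => p q.
by rewrite !ord1 !mxE enum_rankK /= mulr1n.
Qed.
Section W.
Variables (V : finType).
Implicit Types (a : {set V}) (b : {set bool}).

Lemma memLL a x : (inl x \in (inl @: a : {set V + bool})) = (x \in a).
Proof. by rewrite mem_imset //; move=> ? ? []. Qed.
Lemma memLR b x : (inl x \in (inr @: b : {set V + bool})) = false.
Proof. by apply/imsetP => -[]. Qed.
Lemma memRL a (x : bool) : (inr x \in (inl @: a : {set V + bool})) = false.
Proof. by apply/imsetP => -[]. Qed.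
Lemma memRR b (x : bool) : (inr x \in (inr @: b : {set V + bool})) = (x \in b).
Proof. by rewrite mem_imset //; move=> ? ? []. Qed.

Lemma link_del (K : {set {set V}}) v a : a \in link K [set v] -> a \in del K v.
Proof. rewrite !inE disjoints1 => /andP [-> /andP [_ ->]] //. Qed.

Lemma wedge_inv (K : {set {set V}}) v s : s \in wedge K v ->
  exists a b, [/\ s = inl @: a :|: inr @: b, a \in del K v &
                 (b \in dI1 \/ a \in link K [set v])].
Proof.
rewrite /wedge /join inE => /orP [] /imset2P [a b ha hb ->]; exists a, b; split => //.
- exact: link_del.
- by right.
- by left.
Qed.

Lemma wedge_del (K : {set {set V}}) v a b : a \in del K v -> b \in dI1 ->
  inl @: a :|: inr @: b \in wedge K v.
Proof. by move=> ha hb; rewrite /wedge /join inE; apply/orP; right; apply: imset2_f. Qed.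

Lemma wedge_link (K : {set {set V}}) v a b : a \in link K [set v] ->
  inl @: a :|: inr @: b \in wedge K v.
Proof.
move=> ha; rewrite /wedge /join inE; apply/orP; left; apply: imset2_f => //.
by rewrite /I1 powersetE subsetT.
Qed.

Lemma bset b : b = set0 \/ b = [set false] \/ b = [set true] \/ b = setT.
Proof.
case hf: (false \in b); case ht: (true \in b).
- by do 3 right; apply/setP => -[]; rewrite !inE.
- by right; left; apply/setP => -[]; rewrite !inE.
- by right; right; left; apply/setP => -[]; rewrite !inE.
- by left; apply/setP => -[]; rewrite !inE.
Qed.


Lemma vert_notv (K : {set {set V}}) v x : [set inl x] \in wedge K v -> x != v.
Proof.
case/wedge_inv => a [b [E ha _]].
have : (inl x : V + bool) \in [set (inl x : V + bool)] := set11 _.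
rewrite E inE memLL memLR orbF => xa.
by apply/eqP => xv; move: ha; rewrite inE -xv xa andbF.
Qed.

Lemma dI1_1 (b : bool) : [set b] \in dI1.
Proof. by case: b; rewrite !inE eqxx ?orbT. Qed.

Lemma del0 (K : {set {set V}}) v : simplicial_complex K -> set0 \in del K v.
Proof. by case=> h _; rewrite inE h inE. Qed.

Lemma vert_inr (K : {set {set V}}) v (hsc : simplicial_complex K) (β : bool) :
  inr β \in vertices (wedge K v).
Proof.
rewrite inE.
have -> : [set inr β] = inl @: set0 :|: inr @: [set β] :> {set V + bool}.
  by apply/setP => -[z|z]; rewrite !inE ?memLL ?memLR ?memRL ?memRR ?inE.
by apply: wedge_del; [exact: del0 | exact: dI1_1].
Qed.

Lemma VX (K : {set {set V}}) v (hsc : simplicial_complex K)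
  (hs : forall x, [set x] \in K) (hv : v \in vertices K) (β : bool) x :
  x \in vertices (wedge K v) -> x != inr β ->
  x \in vertices (link (wedge K v) [set inr β]).
Proof.
move=> hx hne; rewrite inE in hx; rewrite inE /link inE hx /= disjoints1 inE eq_sym hne andbT.
case: x hx hne => [y|b'] hx hne.
- have yv := vert_notv hx.
  have -> : [set inr β] :|: [set inl y] = inl @: [set y] :|: inr @: [set β] :> {set V + bool}.
    by apply/setP => -[z|z]; rewrite !inE ?memLL ?memLR ?memRL ?memRR ?inE // orbC.
  apply: wedge_del; last exact: dI1_1.
  by rewrite inE hs inE eq_sym yv.
- have -> : [set inr β] :|: [set inr b'] = inl @: set0 :|: inr @: setT :> {set V + bool}.
    move: hne {hx}; case: β; case: b' => // _;
    by apply/setP => -[z|[]]; rewrite !inE ?memLL ?memLR ?memRL ?memRR ?inE.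
  apply: wedge_link; rewrite !inE setU0 disjoints1 inE.
  by case: hsc => -> _; move: hv; rewrite inE => ->.
Qed.

End W.

Lemma set0_dI1 : set0 \in dI1.
Proof. by rewrite !inE eqxx. Qed.

Ltac sset := apply/setP => -[?|[]]; rewrite !inE ?memLL ?memLR ?memRL ?memRR ?inE ?orbF ?orbT //.

Lemma fwd (V : finType) (K : {set {set V}}) v d (lam : V + bool -> 'rV['F_2]_d) β :
  nonsingular (wedge K v) lam -> proj_nonsingular (wedge K v) [set inr β] lam.
Proof.
move=> NS t; rewrite /link in_set => /andP [tW /andP [aW]]; rewrite disjoints1 => nt.
by apply: L1 nt; apply: NS.
Qed.

Lemma use_proj (V : finType) (K : {set {set V}}) v d (lam : V + bool -> 'rV['F_2]_d) β t :
  indep_on lam [set inr β] -> proj_nonsingular (wedge K v) [set inr β] lam ->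
  t \in wedge K v -> inr β |: t \in wedge K v -> inr β \notin t ->
  indep_on lam (inr β |: t).
Proof.
move=> Ha P tW aW nt; apply: L2 => //; apply: P.
by rewrite /link in_set tW aW /= disjoints1.
Qed.

Lemma bwd (V : finType) (K : {set {set V}}) v d (lam : V + bool -> 'rV['F_2]_d) :
  indep_on lam [set inr false] -> indep_on lam [set inr true] ->
  proj_nonsingular (wedge K v) [set inr false] lam ->
  proj_nonsingular (wedge K v) [set inr true] lam ->
  nonsingular (wedge K v) lam.
Proof.
move=> H1 H2 P1 P2 s sW.
have [a [b [E ha hb]]] := wedge_inv sW.
case: (bset b) => [Eb|[Eb|[Eb|Eb]]]; rewrite {b}Eb in E hb.
- apply: (@L3 _ _ _ (span_of lam [set inr false])); apply: P1.
  rewrite /link in_set sW /= disjoints1 E.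
  have -> : inr false |: (inl @: a :|: inr @: set0) = inl @: a :|: inr @: [set false] :> {set V + bool}.
    by sset.
  by rewrite wedge_del ?dI1_1 //= !inE memRL memRR inE.
- have Es : s = inr false |: inl @: a.
    by rewrite E; sset.
  rewrite Es; apply: (use_proj (K:=K) (v:=v)) => //.
  + have -> : inl @: a = inl @: a :|: inr @: set0 :> {set V + bool} by sset.
    by apply: wedge_del ha set0_dI1.
  + by rewrite -Es.
  + by rewrite ?inE ?memRL ?memRR ?inE.
- have Es : s = inr true |: inl @: a.
    by rewrite E; sset.
  rewrite Es; apply: (use_proj (K:=K) (v:=v)) => //.
  + have -> : inl @: a = inl @: a :|: inr @: set0 :> {set V + bool} by sset.
    by apply: wedge_del ha set0_dI1.
  + by rewrite -Es.
  + by rewrite ?inE ?memRL ?memRR ?inE.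
- have hl : a \in link K [set v].
    case: hb => // hT; exfalso; move: hT; rewrite !inE.
    case/orP => [/orP [] | ] /eqP /setP H; [have := H true | have := H true | have := H false];
    by rewrite !inE.
  have Es : s = inr false |: (inl @: a :|: inr @: [set true]).
    by rewrite E; sset.
  rewrite Es; apply: (use_proj (K:=K) (v:=v)) => //.
  + exact: wedge_link.
  + by rewrite -Es.
  + by rewrite ?inE ?memRL ?memRR ?inE.
Qed.

Lemma key_g (T : finType) d (lam lam' : T -> 'rV['F_2]_d) (g : 'M_d) a :
  g \in unitmx -> lam a != 0 ->
  (span_of lam [set a] *m g == span_of lam' [set a])%MS -> lam a *m g = lam' a.
Proof.
move=> gu nz; rewrite !span1 => /andP [s1 _].
have : (lam a *m g <= <<lam' a>>)%MS.
  by apply: submx_trans s1; apply: submxMr; rewrite genmxE.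
case/sub_line => k hk.
have k1 : k = 1.
  apply: F2_nz; apply/eqP => k0; move/eqP: nz; apply.
  by rewrite -(mulmxK gu (lam a)) hk k0 scale0r mul0mx.
by rewrite hk k1 scale1r.
Qed.

Lemma decomp (V : finType) (K : {set {set V}}) v d (lam lam' : V + bool -> 'rV['F_2]_d)
  β (g : 'M_d) :
  lam (inr β) *m g = lam' (inr β) ->
  (forall w, w \in vertices (link (wedge K v) [set inr β]) ->
     (lam w *m g - lam' w <= span_of lam' [set inr β])%MS) ->
  (forall x, x \in vertices (wedge K v) -> x != inr β ->
     x \in vertices (link (wedge K v) [set inr β])) ->
  forall x, x \in vertices (wedge K v) ->
    exists k, lam' x = lam x *m g + k *: lam' (inr β).
Proof.
move=> h0 hl hv x xV; case: (eqVneq x (inr β)) => [->|ne].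
  by exists 0; rewrite scale0r addr0.
have := hl x (hv x xV ne); rewrite span1 => /sub_line [k hk].
by exists (- k); rewrite scaleNr -hk opprB addrC subrK.
Qed.

Definition eps d (T : finType) (lam lam' : T -> 'rV['F_2]_d) (g : 'M_d) (u : 'rV_d) x
  : 'F_2 := odflt 0 [pick k : 'F_2 | lam' x == lam x *m g + k *: u].

Lemma epsP d (T : finType) (lam lam' : T -> 'rV['F_2]_d) (g : 'M_d) (u : 'rV_d) x :
  (exists k, lam' x = lam x *m g + k *: u) ->
  lam' x = lam x *m g + eps lam lam' g u x *: u.
Proof.
case=> k hk; rewrite /eps; case: pickP => [k' /eqP //| H].
by move: (H k); rewrite hk eqxx.
Qed.

Lemma part1 (V : finType) (K : {set {set V}}) v d
  (hsc : simplicial_complex K) (hs : forall x, [set x] \in K) (hv : v \in vertices K)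
  (lam lam' : V + bool -> 'rV['F_2]_d) :
  indep_on lam [set inr false] -> indep_on lam [set inr true] ->
  indep_on lam' [set inr false] -> indep_on lam' [set inr true] ->
  indep_on lam [set inr false; inr true] ->
  proj_DJ_equiv (wedge K v) [set inr false] lam lam' ->
  proj_DJ_equiv (wedge K v) [set inr true] lam lam' ->
  DJ_equiv (wedge K v) lam lam'.
Proof.
move=> hu hw hu' hw' h12 [g1 g1u [hs1 hl1]] [g2 g2u [hs2 hl2]].
set X := vertices (wedge K v).
set u := lam (inr false); set w := lam (inr true).
set u' := lam' (inr false); set w' := lam' (inr true).
have eu : u *m g1 = u' := key_g g1u (nz_of_indep hu) hs1.
have ew : w *m g2 = w' := key_g g2u (nz_of_indep hw) hs2.
pose e1 := eps lam lam' g1 u'. pose e2 := eps lam lam' g2 w'.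
have E1 : forall x, x \in X -> lam' x = lam x *m g1 + e1 x *: u'.
  move=> x xX; apply: epsP; apply: (decomp eu hl1 _ xX) => y; exact: VX.
have E2 : forall x, x \in X -> lam' x = lam x *m g2 + e2 x *: w'.
  move=> x xX; apply: epsP; apply: (decomp ew hl2 _ xX) => y; exact: VX.
clearbody e1 e2.
have e1v1 : e1 (inr false) = 0.
  have := E1 _ (vert_inr v hsc false); rewrite -/u eu => h.
  have : e1 (inr false) *: u' = 0.
    by rewrite -[X in X = _](addKr u') -h addNr.
  by move/eqP; rewrite scaler_eq0 (negbTE (nz_of_indep hu')) orbF => /eqP.
pose a' := fun x => if x \in X then lam x else 0.
pose ee := fun x => if x \in X then e1 x else 0.
have [f hf] : exists f : 'cV_d, forall x, a' x *m f = (ee x)%:M.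
  apply: dual_ext => c hc.
  pose l' := fun x => if x \in X then lam' x else 0.
  have gen : forall (g : 'M_d) (z : 'rV_d) (ef : _ -> 'F_2),
      (forall x, x \in X -> lam' x = lam x *m g + ef x *: z) ->
      \sum_x c x *: l' x = (\sum_x c x * (if x \in X then ef x else 0)) *: z.
    move=> g z ef hE.
    have -> : \sum_x c x *: l' x =
              \sum_x ((c x *: a' x) *m g + (c x * (if x \in X then ef x else 0)) *: z).
      apply: eq_bigr => x _; rewrite /l' /a'; case: ifP => xX.
        by rewrite hE // scalerDr scalemxAl scalerA.
      by rewrite !scaler0 mul0mx mulr0 scale0r addr0.
    by rewrite big_split /= -mulmx_suml hc mul0mx add0r scaler_suml.
  have H1 := gen g1 u' e1 E1; have H2 := gen g2 w' e2 E2.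
  pose s1 := \sum_x c x * (if x \in X then e1 x else 0).
  pose s2 := \sum_x c x * (if x \in X then e2 x else 0).
  rewrite -/s1 in H1; rewrite -/s2 in H2.
  change (s1 = 0); clearbody s1 s2.
  have hw'1 : w' = w *m g1 + e1 (inr true) *: u' := E1 _ (vert_inr v hsc true).
  have hs1' : s1 *: u' = s2 *: (w *m g1) + (s2 * e1 (inr true)) *: u'.
    by rewrite -H1 H2 hw'1 scalerDr scalerA.
  have : ((s1 - s2 * e1 (inr true)) *: u + (- s2) *: w) *m g1 = 0.
    by rewrite mulmxDl -!scalemxAl eu scalerBl hs1' addrK scaleNr addrN.
  move/(canRL (mulmxK g1u)); rewrite mul0mx => hz.
  have := h12 (fun y => if y == inr false then s1 - s2 * e1 (inr true) else - s2).
  rewrite big_setU1 ?big_set1 ?inE //= hz sub0mx => /(_ isT) H.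
  have s20 : s2 = 0.
    by apply/eqP; rewrite -oppr_eq0; apply/eqP; have := H (inr true); rewrite !inE orbT => /(_ isT).
  have := H (inr false); rewrite !inE eqxx /= => /(_ isT); rewrite s20 mul0r subr0.
  by [].
have uf : u *m f = 0.
  have := hf (inr false); rewrite /a' /ee vert_inr // => ->.
  by rewrite e1v1 raddf0.
exists (g1 + f *m u').
  have -> : g1 + f *m u' = (1%:M + f *m u) *m g1 by rewrite mulmxDl mul1mx -mulmxA eu.
  rewrite unitmx_mul g1u andbT.
  have [] // := @mulmx1_unit _ _ (1%:M + f *m u) (1%:M - f *m u).
  rewrite mulmxDl mul1mx mulmxBr mulmx1 !mulmxA -(mulmxA f u f) uf mulmx0 mul0mx.
  by rewrite subr0 subrK.
move=> x xX; rewrite mulmxDr mulmxA.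
have := hf x; rewrite /a' /ee xX => ->.
by rewrite mul_scalar_mx -E1.
Qed.
Theorem theorem1p2 (V : finType) (K : {set {set V}}) (n : nat) (v : V) (d : nat) :
  simplicial_complex K ->
  (forall x : V, [set x] \in K) ->          (* V is the vertex set of K *)
  fan_like K n ->                           (* K is a fan-like (n-1)-sphere *)
  v \in vertices K ->
  (n < d)%N ->                              (* dim wed_v(K) = n <= d - 1 *)
  (* uniqueness: lam is determined (up to DJ) by its two projections *)
  (forall lam lam' : V + bool -> 'rV['F_2]_d,
      indep_on lam [set v1 V] -> indep_on lam [set v2 V] ->
      indep_on lam' [set v1 V] -> indep_on lam' [set v2 V] ->
      indep_on lam [set v1 V; v2 V] ->
      proj_DJ_equiv (wedge K v) [set v1 V] lam lam' ->
      proj_DJ_equiv (wedge K v) [set v2 V] lam lam' ->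
      DJ_equiv (wedge K v) lam lam')
  /\
  (* non-singularity criterion *)
  (forall lam : V + bool -> 'rV['F_2]_d,
      indep_on lam [set v1 V] -> indep_on lam [set v2 V] ->
      (nonsingular (wedge K v) lam <->
       proj_nonsingular (wedge K v) [set v1 V] lam /\
       proj_nonsingular (wedge K v) [set v2 V] lam)).
Proof.
move=> hsc hs fan hv nd; split.
- move=> lam lam' hu hw hu' hw' h12 p1 p2.
  exact: (part1 hsc hs hv hu hw hu' hw' h12 p1 p2).
- move=> lam hu hw; split.
  + by move=> NS; split; apply: fwd.
  + by case=> P1 P2; apply: (bwd hu hw P1 P2).
Qed.
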